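(* Let $a>0$, let $\psi\in C^2([0,a])$ with $\psi>0$ on $[0,a]$, let $0<R_1<R_2<a$, let $\beta>0$, set $\overline B:=\max_{[0,a]}\big|(\psi'/\psi)'\big|$, and for $B>\overline B$ let $z_1=z_1(r,B)$ be the solution of $$\Big[\frac{(\psi z)'}{\psi}\Big]'-Bz=0\ \text{ in }[0,R_1),\qquad z(0)=0,\ z'(0)=1,$$ and $z_2=z_2(r,B,\beta)$ the solution of $$\Big[\frac{(\psi z)'}{\psi}\Big]'-Bz=0\ \text{ in }(R_2,a],\qquad z(a)=\beta,\ z'(a)=-1.$$ Then: (i) $z_1>0$ in $(0,R_1)$; (ii) $z_1(\cdot,B)$ is increasing in $[0,R_1)$ for any $B>\overline B$; (iii) $B\mapsto z_1(r,B)$ is increasing on $(\overline B,\infty)$ for any $r\in(0,R_1)$; (iv) $\lim_{B\to\infty}z_1(r,B)=\infty$ for any $r\in(0,R_1)$. Similarly: (i') $z_2>\beta$ in $(R_2,a)$; (ii') $z_2(\cdot,B)$ is decreasing in $(R_2,a)$ for any $B>\overline B$; (iii') $B\mapsto z_2(r,B)$ is increasing on $(\overline B,\infty)$ for any $r\in(R_2,a)$; (iv') $\lim_{B\to\infty}z_2(r,B)=\infty$ for any $r\in(R_2,a)$.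
   Context: The differential equation can be written equivalently as $z''+\frac{\psi'}{\psi}z'+\big[(\psi'/\psi)'-B\big]z=0$. *)

(* Defs.v *)
From Stdlib Require Import Reals.
Open Scope R_scope.

(* Derivative of f at x relative to the set D (one-sided at endpoints of an
   interval D, the usual two-sided derivative at interior points). *)
Definition deriv_in (D : R -> Prop) (f : R -> R) (x l : R) : Prop :=
  forall eps, 0 < eps -> exists delta, 0 < delta /\
    forall y, D y -> y <> x -> Rabs (y - x) < delta ->
      Rabs ((f y - f x) / (y - x) - l) < eps.

Definition cont_in (D : R -> Prop) (f : R -> R) (x : R) : Prop :=
  forall eps, 0 < eps -> exists delta, 0 < delta /\
    forall y, D y -> Rabs (y - x) < delta -> Rabs (f y - f x) < eps.

Definition C2_on (D : R -> Prop) (psi dpsi d2psi : R -> R) : Prop :=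
  forall x, D x ->
    deriv_in D psi x (dpsi x) /\ deriv_in D dpsi x (d2psi x) /\ cont_in D d2psi x.

(* z solves  [ (psi z)' / psi ]' - B z = 0  on D:
   psi*z is differentiable on D with derivative w, and w/psi is
   differentiable on D with derivative B z. *)
Definition solves_ode (psi : R -> R) (B : R) (D : R -> Prop) (z : R -> R) : Prop :=
  exists w : R -> R, forall r, D r ->
    deriv_in D (fun t => psi t * z t) r (w r) /\
    deriv_in D (fun t => w t / psi t) r (B * z r).

(* Main.v *)
Require Import Defs.
From Stdlib Require Import Reals Lra Classical.
Open Scope R_scope.

Lemma cont_lim D f x : cont_in D f x <-> limit1_in f D (f x) x.
Proof.
  unfold cont_in, limit1_in, limit_in; simpl; unfold Rdist; split.
  - intros H eps He; destruct (H eps He) as [d [Hd H']]; exists d; split; [lra|].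
    intros y [Dy Hy]; apply H'; auto.
  - intros H eps He; destruct (H eps He) as [d [Hd H']]; exists d; split; [lra|].
    intros y Dy Hy; apply H'; auto.
Qed.

Definition dqf (f : R -> R) x := fun y => (f y - f x) / (y - x).
Definition Dx (D : R -> Prop) x := fun y => D y /\ y <> x.

Lemma deriv_lim D f x l : deriv_in D f x l <-> limit1_in (dqf f x) (Dx D x) l x.
Proof.
  unfold deriv_in, limit1_in, limit_in, dqf, Dx; simpl; unfold Rdist; split.
  - intros H eps He; destruct (H eps He) as [d [Hd H']]; exists d; split; [lra|].
    intros y [[Dy Hne] Hy]; apply H'; auto.
  - intros H eps He; destruct (H eps He) as [d [Hd H']]; exists d; split; [lra|].
    intros y Dy Hne Hy; apply H'; auto.
Qed.

Lemma lim_ext f g D l x : (forall y, D y -> f y = g y) -> limit1_in f D l x -> limit1_in g D l x.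
Proof.
  unfold limit1_in, limit_in; intros E H eps He; destruct (H eps He) as [d [Hd H']].
  exists d; split; auto; intros y [Dy Hy]; rewrite <- E by auto; apply H'; auto.
Qed.

Lemma lim_sub f D D' l x : (forall y, D' y -> D y) -> limit1_in f D l x -> limit1_in f D' l x.
Proof.
  unfold limit1_in, limit_in; intros E H eps He; destruct (H eps He) as [d [Hd H']].
  exists d; split; auto; intros y [Dy Hy]; apply H'; auto.
Qed.

Lemma lim_id D x : limit1_in (fun y => y) D x x.
Proof.
  unfold limit1_in, limit_in; intros eps He; exists eps; split; auto; intros y [_ Hy]; auto.
Qed.

Lemma lim_const D c x : limit1_in (fun _ => c) D c x.
Proof.
  unfold limit1_in, limit_in; intros eps He; exists 1; split; [lra|]; intros y _; simpl;
  unfold Rdist; rewrite Rminus_diag, Rabs_R0; lra.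
Qed.

Lemma deriv_sub D E f x l : (forall y, E y -> D y) -> deriv_in D f x l -> deriv_in E f x l.
Proof.
  intros HE H; apply deriv_lim; apply deriv_lim in H; eapply lim_sub; [|exact H].
  unfold Dx; intros y [Ey Hy]; auto.
Qed.

Lemma deriv_ext D f g x l : D x -> (forall y, D y -> f y = g y) -> deriv_in D f x l -> deriv_in D g x l.
Proof.
  intros Dx0 E H; apply deriv_lim; apply deriv_lim in H; eapply lim_ext; [|exact H].
  unfold Dx, dqf; intros y [Ey Hy]; rewrite !E; auto.
Qed.

Lemma deriv_cont D f x l : D x -> deriv_in D f x l -> cont_in D f x.
Proof.
  intros Dx0 H; apply deriv_lim in H.
  assert (H2 : limit1_in (fun y => f x + dqf f x y * (y - x)) (Dx D x) (f x + l * (x - x)) x).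
  { apply limit_plus; [apply lim_const|]. apply limit_mul; auto.
    apply limit_minus; [apply lim_id|apply lim_const]. }
  replace (f x + l * (x - x)) with (f x) in H2 by ring.
  apply cont_lim. unfold limit1_in, limit_in in *; intros eps He.
  destruct (H2 eps He) as [d [Hd H']]; exists d; split; auto.
  intros y [Dy Hy]. destruct (Req_dec y x) as [->|Hne].
  - simpl; unfold Rdist; rewrite Rminus_diag, Rabs_R0; lra.
  - specialize (H' y (conj (conj Dy Hne) Hy)). unfold dqf in H'.
    replace (f x + (f y - f x) / (y - x) * (y - x)) with (f y) in H' by (field; lra). exact H'.
Qed.

Lemma cont_lim' D f x : cont_in D f x -> limit1_in f (Dx D x) (f x) x.
Proof. intros H; apply cont_lim in H; eapply lim_sub; [|exact H]. unfold Dx; tauto. Qed.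

Lemma deriv_plus D f g x lf lg : deriv_in D f x lf -> deriv_in D g x lg ->
  deriv_in D (fun t => f t + g t) x (lf + lg).
Proof.
  intros Hf Hg; apply deriv_lim in Hf; apply deriv_lim in Hg; apply deriv_lim.
  eapply lim_ext; [|apply (limit_plus _ _ _ _ _ _ Hf Hg)].
  unfold Dx, dqf; intros y [_ Hy]; field; lra.
Qed.

Lemma deriv_minus D f g x lf lg : deriv_in D f x lf -> deriv_in D g x lg ->
  deriv_in D (fun t => f t - g t) x (lf - lg).
Proof.
  intros Hf Hg; apply deriv_lim in Hf; apply deriv_lim in Hg; apply deriv_lim.
  eapply lim_ext; [|apply (limit_minus _ _ _ _ _ _ Hf Hg)].
  unfold Dx, dqf; intros y [_ Hy]; field; lra.
Qed.

Lemma deriv_mult D f g x lf lg : D x -> deriv_in D f x lf -> deriv_in D g x lg ->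
  deriv_in D (fun t => f t * g t) x (lf * g x + f x * lg).
Proof.
  intros Dx0 Hf Hg.
  assert (Cg := cont_lim' _ _ _ (deriv_cont _ _ _ _ Dx0 Hg)).
  apply deriv_lim in Hf; apply deriv_lim in Hg; apply deriv_lim.
  eapply lim_ext; [|apply (limit_plus _ _ _ _ _ _ (limit_mul _ _ _ _ _ _ Hf Cg)
     (limit_mul _ _ _ _ _ _ (lim_const _ (f x) x) Hg))].
  unfold Dx, dqf; intros y [_ Hy]; field; lra.
Qed.

Lemma deriv_inv D f x l : D x -> (forall y, D y -> f y <> 0) -> deriv_in D f x l ->
  deriv_in D (fun t => / f t) x (- l / (f x * f x)).
Proof.
  intros Dx0 Hnz Hf.
  assert (Cf := cont_lim' _ _ _ (deriv_cont _ _ _ _ Dx0 Hf)).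
  assert (Hfx := Hnz x Dx0).
  apply deriv_lim in Hf; apply deriv_lim.
  assert (Hi : limit1_in (fun y => / (f y * f x)) (Dx D x) (/ (f x * f x)) x).
  { apply limit_inv; [|apply Rmult_integral_contrapositive; auto].
    apply limit_mul; auto; apply lim_const. }
  eapply lim_ext; [|apply (limit_mul _ _ _ _ _ _ (limit_Ropp _ _ _ _ Hf) Hi)].
  unfold Dx, dqf; intros y [Dy Hy]. assert (f y <> 0) by auto. field; repeat split; auto; lra.
Qed.

Lemma deriv_div D f g x lf lg : D x -> (forall y, D y -> g y <> 0) -> deriv_in D f x lf -> deriv_in D g x lg ->
  deriv_in D (fun t => f t / g t) x ((lf * g x - f x * lg) / (g x * g x)).
Proof.
  intros Dx0 Hnz Hf Hg.
  pose proof (deriv_mult _ _ _ _ _ _ Dx0 Hf (deriv_inv _ _ _ _ Dx0 Hnz Hg)) as H.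
  assert (Hgx := Hnz x Dx0).
  replace ((lf * g x - f x * lg) / (g x * g x)) with (lf * / g x + f x * (- lg / (g x * g x))) by (field; auto).
  exact H.
Qed.

Lemma deriv_unique c d f x l1 l2 : c < d -> c <= x <= d ->
  deriv_in (fun t => c <= t <= d) f x l1 -> deriv_in (fun t => c <= t <= d) f x l2 -> l1 = l2.
Proof.
  intros Hcd Hx H1 H2; apply deriv_lim in H1; apply deriv_lim in H2.
  eapply single_limit; [|exact H1|exact H2].
  intros alp Ha. set (e := Rmin (alp/2) ((d-c)/2)).
  assert (He1 : e <= alp/2) by apply Rmin_l. assert (He2 : e <= (d-c)/2) by apply Rmin_r.
  assert (He3 : 0 < e) by (unfold e; apply Rmin_glb_lt; lra).
  destruct (Rle_dec x ((c+d)/2)).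
  - exists (x + e); unfold Dx, Rdist; split; [split; lra|].
    replace (x + e - x) with e by ring; rewrite Rabs_right; lra.
  - exists (x - e); unfold Dx, Rdist; split; [split; lra|].
    replace (x - e - x) with (- e) by ring; rewrite Rabs_Ropp, Rabs_right; lra.
Qed.

Definition clamp c d x := Rmax c (Rmin d x).

Lemma clamp_in c d x : c <= d -> c <= clamp c d x <= d.
Proof. unfold clamp, Rmax, Rmin; intros; repeat destruct Rle_dec; lra. Qed.

Lemma clamp_id c d x : c <= x <= d -> clamp c d x = x.
Proof. unfold clamp, Rmax, Rmin; intros; repeat destruct Rle_dec; lra. Qed.

Lemma clamp_lip c d x y : c <= d -> c <= x <= d -> Rabs (clamp c d y - x) <= Rabs (y - x).
Proof.
  intros; unfold clamp, Rmax, Rmin, Rabs; repeat destruct Rle_dec; repeat destruct Rcase_abs; lra.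
Qed.

Lemma clamp_cont D f c d x : c <= d -> (forall t, c <= t <= d -> D t) -> c <= x <= d ->
  cont_in D f x -> continuity_pt (fun t => f (clamp c d t)) x.
Proof.
  intros Hcd HD Hx H. unfold continuity_pt, continue_in, limit1_in, limit_in; simpl; unfold Rdist.
  intros eps He; destruct (H eps He) as [del [Hdel H']]; exists del; split; [lra|].
  intros y [_ Hy]. rewrite (clamp_id c d x Hx). apply H'.
  - apply HD, clamp_in; auto.
  - pose proof (clamp_lip c d x y Hcd Hx); lra.
Qed.

Lemma clamp_der D f f' c d x : c < d -> (forall t, c <= t <= d -> D t) -> c < x < d ->
  deriv_in D f x (f' x) -> derivable_pt_lim (fun t => f (clamp c d t)) x (f' x).
Proof.
  intros Hcd HD Hx H eps He. destruct (H eps He) as [del [Hdel H']].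
  assert (Hp : 0 < Rmin del (Rmin (x - c) (d - x))) by (repeat apply Rmin_glb_lt; lra).
  exists (mkposreal _ Hp); simpl; intros h Hh Hhd.
  assert (H1 := Rmin_l del (Rmin (x - c) (d - x))).
  assert (H2 := Rmin_r del (Rmin (x - c) (d - x))).
  assert (H3 := Rmin_l (x - c) (d - x)). assert (H4 := Rmin_r (x - c) (d - x)).
  assert (Hb : - h <= Rabs h /\ h <= Rabs h) by (split; [rewrite <- Rabs_Ropp|]; apply RRle_abs).
  rewrite (clamp_id c d x) by lra. rewrite (clamp_id c d (x+h)) by lra.
  specialize (H' (x + h)). replace (x + h - x) with h in H' by ring.
  apply H'; [apply HD; lra| |lra]. intro; apply Hh; lra.
Qed.

Lemma mvt_in D f f' c d : c < d -> (forall x, c <= x <= d -> D x) ->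
  (forall x, c <= x <= d -> deriv_in D f x (f' x)) ->
  exists xi, c < xi < d /\ f d - f c = f' xi * (d - c).
Proof.
  intros Hcd HD Hder. set (g := fun t => f (clamp c d t)).
  assert (Hd : forall t, c < t < d -> derivable_pt_lim g t (f' t)).
  { intros t Ht; apply (clamp_der D); auto; apply Hder; lra. }
  set (pr1 := fun t (H : c < t < d) => exist (fun l => derivable_pt_abs g t l) (f' t) (Hd t H) : derivable_pt g t).
  set (pr2 := fun t (H : c < t < d) => derivable_pt_id t).
  destruct (MVT g id c d pr1 pr2 Hcd) as [xi [P HP]].
  - intros t Ht; apply (clamp_cont D); auto; try lra. apply (deriv_cont _ _ _ (f' t)); auto.
  - intros t Ht; apply derivable_continuous_pt, derivable_pt_id.
  - exists xi; split; auto. unfold pr1, pr2 in HP; simpl in HP.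
    rewrite derive_pt_id in HP. unfold g, id in HP.
    rewrite (clamp_id c d c), (clamp_id c d d) in HP by lra. lra.
Qed.

Lemma mvt_lb D f f' c d k : c < d -> (forall x, c <= x <= d -> D x) ->
  (forall x, c <= x <= d -> deriv_in D f x (f' x)) -> (forall x, c < x < d -> k <= f' x) ->
  k * (d - c) <= f d - f c.
Proof.
  intros Hcd HD Hder Hk. destruct (mvt_in D f f' c d) as [xi [Hxi E]]; auto.
  rewrite E. apply Rmult_le_compat_r; [lra|]; auto.
Qed.

Lemma mvt_ub D f f' c d k : c < d -> (forall x, c <= x <= d -> D x) ->
  (forall x, c <= x <= d -> deriv_in D f x (f' x)) -> (forall x, c < x < d -> f' x <= k) ->
  f d - f c <= k * (d - c).
Proof.
  intros Hcd HD Hder Hk. destruct (mvt_in D f f' c d) as [xi [Hxi E]]; auto.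
  rewrite E. apply Rmult_le_compat_r; [lra|]; auto.
Qed.

Lemma mvt_pos D f f' c d : c < d -> (forall x, c <= x <= d -> D x) ->
  (forall x, c <= x <= d -> deriv_in D f x (f' x)) -> (forall x, c < x < d -> 0 < f' x) ->
  f c < f d.
Proof.
  intros Hcd HD Hder Hk. destruct (mvt_in D f f' c d) as [xi [Hxi E]]; auto.
  assert (0 < f' xi * (d - c)) by (apply Rmult_lt_0_compat; auto; lra). lra.
Qed.

Lemma mvt_neg D f f' c d : c < d -> (forall x, c <= x <= d -> D x) ->
  (forall x, c <= x <= d -> deriv_in D f x (f' x)) -> (forall x, c < x < d -> f' x < 0) ->
  f d < f c.
Proof.
  intros Hcd HD Hder Hk. destruct (mvt_in D f f' c d) as [xi [Hxi E]]; auto.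
  assert (0 < - f' xi * (d - c)) by (apply Rmult_lt_0_compat; auto; try lra; specialize (Hk xi Hxi); lra). lra.
Qed.

Lemma evt D f c d : c <= d -> (forall x, c <= x <= d -> D x) -> (forall x, c <= x <= d -> cont_in D f x) ->
  (exists M, forall x, c <= x <= d -> f x <= M) /\ (exists m, c <= m <= d /\ forall x, c <= x <= d -> f m <= f x).
Proof.
  intros Hcd HD Hc. set (g := fun t => f (clamp c d t)).
  assert (Hg : forall t, c <= t <= d -> continuity_pt g t) by (intros; apply (clamp_cont D); auto).
  split.
  - destruct (continuity_ab_maj g c d Hcd Hg) as [M [HM _]]. exists (g M); intros x Hx.
    specialize (HM x Hx); unfold g in HM; rewrite clamp_id in HM; auto.
  - destruct (continuity_ab_min g c d Hcd Hg) as [m [Hm Hm']]. exists m; split; auto; intros x Hx.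
    specialize (Hm x Hx); unfold g in Hm; rewrite !clamp_id in Hm; auto.
Qed.

Lemma first_zero D g c e : c < e -> (forall x, c <= x <= e -> D x) ->
  (forall x, c <= x <= e -> cont_in D g x) -> 0 < g c -> g e <= 0 ->
  exists t0, c < t0 <= e /\ g t0 <= 0 /\ forall s, c <= s < t0 -> 0 < g s.
Proof.
  intros Hce HD Hc Hgc Hge.
  set (E := fun t => c <= t <= e /\ forall s, c <= s <= t -> 0 < g s).
  assert (Hb : bound E) by (exists e; intros t [Ht _]; lra).
  assert (Hn : exists x, E x) by (exists c; split; [lra|]; intros s Hs; replace s with c by lra; auto).
  destruct (completeness E Hb Hn) as [t0 [Hub Hlub]].
  assert (Ht0c : c <= t0) by (apply Hub; destruct Hn as [x Hx]; unfold E; split; [lra|]; intros s Hs; replace s with c by lra; auto).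
  assert (Ht0e : t0 <= e) by (apply Hlub; intros t [Ht _]; lra).
  assert (Hbelow : forall s, c <= s < t0 -> 0 < g s).
  { intros s Hs. apply NNPP; intro Hneg. assert (is_upper_bound E s).
    { intros t [Ht Ht']. destruct (Rle_dec t s) as [|Hts]; auto. exfalso; apply Hneg, Ht'; lra. }
    specialize (Hlub s H); lra. }
  assert (Hz : g t0 <= 0).
  { apply Rnot_lt_le; intro Hpos.
    destruct (Hc t0 (conj Ht0c Ht0e) (g t0) Hpos) as [del [Hdel H']].
    destruct (Req_dec t0 e) as [He|He]; [subst; lra|].
    set (t1 := Rmin (t0 + del/2) e).
    assert (t1 <= t0 + del/2) by apply Rmin_l. assert (t1 <= e) by apply Rmin_r.
    assert (t0 < t1) by (unfold t1; apply Rmin_glb_lt; lra).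
    assert (E t1).
    { split; [lra|]. intros s Hs. destruct (Rlt_dec s t0); [apply Hbelow; lra|].
      specialize (H' s (HD s ltac:(lra))). assert (Hsd : Rabs (s - t0) < del) by (rewrite Rabs_right; lra).
      specialize (H' Hsd). apply Rabs_def2 in H'. lra. }
    match goal with HE : E t1 |- _ => specialize (Hub t1 HE) end; lra. }
  exists t0; repeat split; auto. destruct (Req_dec t0 c); [subst; lra|lra].
Qed.

Lemma last_zero D g c e : c < e -> (forall x, c <= x <= e -> D x) ->
  (forall x, c <= x <= e -> cont_in D g x) -> 0 < g e -> g c <= 0 ->
  exists t0, c <= t0 < e /\ g t0 <= 0 /\ forall s, t0 < s <= e -> 0 < g s.
Proof.
  intros Hce HD Hc Hge Hgc.
  destruct (first_zero (fun x => D (-x)) (fun x => g (-x)) (-e) (-c)) as [t0 [H1 [H2 H3]]].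
  - lra.
  - intros; apply HD; lra.
  - intros x Hx eps He. destruct (Hc (-x) ltac:(lra) eps He) as [del [Hd H']].
    exists del; split; auto; intros y Dy Hy; apply H'; auto.
    replace (-y - -x) with (- (y - x)) by ring; rewrite Rabs_Ropp; auto.
  - rewrite Ropp_involutive; auto.
  - rewrite Ropp_involutive; auto.
  - exists (-t0); repeat split; try lra; auto. intros s Hs. specialize (H3 (-s) ltac:(lra)).
    rewrite Ropp_involutive in H3; auto.
Qed.

Lemma deriv_val D f x l l' : deriv_in D f x l -> l = l' -> deriv_in D f x l'.
Proof. intros H ->; exact H. Qed.

Lemma basic a psi dpsi d2psi dq B D z w :
 0 < a -> C2_on (fun r => 0<=r<=a) psi dpsi d2psi -> (forall r, 0<=r<=a -> 0<psi r) ->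
 (forall r, 0<=r<=a -> deriv_in (fun t => 0<=t<=a) (fun t => dpsi t / psi t) r (dq r)) ->
 (forall y, D y -> 0 <= y <= a) ->
 (forall r, D r -> deriv_in D (fun t => psi t * z t) r (w r) /\ deriv_in D (fun t => w t / psi t) r (B * z r)) ->
 forall r, D r ->
   deriv_in D z r ((w r - dpsi r * z r)/psi r) /\
   deriv_in D (fun t => w t - dpsi t * z t) r (z r * (psi r * (B - dq r))).
Proof.
  intros Ha HC Hpos Hdq HD Hs r Dr.
  assert (Hr := HD r Dr).
  assert (Hnz : forall y, D y -> psi y <> 0) by (intros y Dy; specialize (Hpos y (HD y Dy)); lra).
  assert (Hpr := Hpos r Hr).
  destruct (HC r Hr) as [Hp1 [Hp2 _]].
  assert (Hp1D := deriv_sub _ D _ _ _ HD Hp1).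
  assert (Hp2D := deriv_sub _ D _ _ _ HD Hp2).
  destruct (Hs r Dr) as [HP Hu].
  assert (Hz : deriv_in D z r ((w r - dpsi r * z r)/psi r)).
  { eapply deriv_val.
    - apply (deriv_ext D (fun t => psi t * z t / psi t)); auto.
      + intros y Dy; field; auto.
      + apply deriv_div; auto; [exact HP|exact Hp1D].
    - simpl; field; lra. }
  split; auto.
  assert (Hq : dq r = (d2psi r * psi r - dpsi r * dpsi r) / (psi r * psi r)).
  { apply (deriv_unique 0 a (fun t => dpsi t / psi t) r); [lra|exact Hr|apply Hdq; exact Hr|].
    apply deriv_div; auto. intros y Hy; specialize (Hpos y Hy); lra. }
  assert (Hw : deriv_in D w r (B * z r * psi r + w r / psi r * dpsi r)).
  { apply (deriv_ext D (fun t => w t / psi t * psi t)); auto.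
    - intros y Dy; field; auto.
    - eapply deriv_val; [apply (deriv_mult D (fun t => w t / psi t) psi); [exact Dr|exact Hu|exact Hp1D]|]. reflexivity. }
  assert (Hm : deriv_in D (fun t => dpsi t * z t) r (d2psi r * z r + dpsi r * ((w r - dpsi r * z r)/psi r))).
  { eapply deriv_val; [apply (deriv_mult D dpsi z); [exact Dr|exact Hp2D|exact Hz]|]. reflexivity. }
  eapply deriv_val; [apply (deriv_minus _ _ _ _ _ _ Hw Hm)|].
  simpl; rewrite Hq; field; lra.
Qed.

Lemma wronsk a psi dpsi d2psi B B' D z y wz wy :
 0 < a -> C2_on (fun r => 0<=r<=a) psi dpsi d2psi -> (forall r, 0<=r<=a -> 0<psi r) ->
 (forall y, D y -> 0 <= y <= a) ->
 (forall r, D r -> deriv_in D (fun t => psi t * z t) r (wz r) /\ deriv_in D (fun t => wz t / psi t) r (B * z r)) ->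
 (forall r, D r -> deriv_in D (fun t => psi t * y t) r (wy r) /\ deriv_in D (fun t => wy t / psi t) r (B' * y r)) ->
 forall r, D r ->
   deriv_in D (fun t => psi t * z t * (wy t / psi t) - psi t * y t * (wz t / psi t)) r
     (psi r * (B' - B) * z r * y r).
Proof.
  intros Ha HC Hpos HD Hz Hy r Dr.
  assert (Hr := HD r Dr). assert (Hpr := Hpos r Hr).
  destruct (Hz r Dr) as [Hz1 Hz2]; destruct (Hy r Dr) as [Hy1 Hy2].
  eapply deriv_val; [apply deriv_minus; apply deriv_mult; eauto|].
  simpl; field; lra.
Qed.

Definition Hyp a psi dpsi d2psi dq Bbar : Prop :=
 0 < a /\ C2_on (fun r => 0<=r<=a) psi dpsi d2psi /\ (forall r, 0<=r<=a -> 0<psi r) /\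
 (forall r, 0<=r<=a -> deriv_in (fun t => 0<=t<=a) (fun t => dpsi t / psi t) r (dq r)) /\
 (forall r, 0<=r<=a -> Rabs (dq r) <= Bbar).

Lemma kpos a psi dpsi d2psi dq Bbar B r : Hyp a psi dpsi d2psi dq Bbar -> Bbar < B -> 0<=r<=a ->
  0 < psi r * (B - dq r).
Proof.
  intros (Ha & HC & Hpos & Hdq & Hb) HB Hr. apply Rmult_lt_0_compat; auto.
  pose proof (Rle_abs (dq r)); specialize (Hb r Hr); lra.
Qed.

Lemma basicH a psi dpsi d2psi dq Bbar B D z w : Hyp a psi dpsi d2psi dq Bbar ->
 (forall y, D y -> 0 <= y <= a) ->
 (forall r, D r -> deriv_in D (fun t => psi t * z t) r (w r) /\ deriv_in D (fun t => w t / psi t) r (B * z r)) ->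
 forall r, D r ->
   deriv_in D z r ((w r - dpsi r * z r)/psi r) /\
   deriv_in D (fun t => w t - dpsi t * z t) r (z r * (psi r * (B - dq r))).
Proof. intros (Ha & HC & Hpos & Hdq & Hb); eapply basic; eauto. Qed.

Lemma z1_fixed a psi dpsi d2psi dq Bbar R1 B z w : Hyp a psi dpsi d2psi dq Bbar ->
  0 < R1 -> R1 < a -> Bbar < B ->
  (forall r, 0 <= r < R1 -> deriv_in (fun r => 0 <= r < R1) (fun t => psi t * z t) r (w r) /\
      deriv_in (fun r => 0 <= r < R1) (fun t => w t / psi t) r (B * z r)) ->
  z 0 = 0 -> deriv_in (fun r => 0 <= r < R1) z 0 1 ->
  w 0 = psi 0 /\ (forall r, 0<=r<R1 -> 0 < w r - dpsi r * z r) /\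
  (forall r s, 0<=r<R1 -> 0<=s<R1 -> r<s -> z r < z s).
Proof.
  intros H HR1 HR1a HB Hs Hz0 Hz0'.
  assert (H' := H). destruct H' as (Ha & HC & Hpos & Hdq & Hb).
  set (D1 := fun r => 0 <= r < R1).
  assert (HD : forall y, D1 y -> 0 <= y <= a) by (unfold D1; intros; lra).
  pose proof (basicH _ _ _ _ _ _ _ _ _ _ H HD Hs) as Bs.
  assert (Hk : forall r, D1 r -> 0 < psi r * (B - dq r)) by (intros; eapply kpos; eauto).
  assert (Hw0 : w 0 = psi 0).
  { assert (E : (w 0 - dpsi 0 * z 0) / psi 0 = 1).
    { apply (deriv_unique 0 (R1/2) z 0); [lra|lra| |].
      - apply (deriv_sub D1); [unfold D1; intros; lra|]. apply Bs; unfold D1; lra.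
      - apply (deriv_sub D1); [unfold D1; intros; lra|]. exact Hz0'. }
    rewrite Hz0 in E. assert (psi 0 > 0) by (apply Hpos; lra).
    apply (Rmult_eq_compat_r (psi 0)) in E. field_simplify in E; lra. }
  set (p := fun t => w t - dpsi t * z t).
  assert (Hp : forall r, 0<=r<R1 -> 0 < p r).
  { intros r1 Hr1. destruct (Req_dec r1 0) as [->|Hne].
    { unfold p; rewrite Hw0, Hz0; assert (psi 0 > 0) by (apply Hpos; lra); lra. }
    apply Rnot_le_lt; intro Hle.
    destruct (first_zero D1 p 0 r1) as [t0 [Ht0 [Hpt0 Hbel]]]; try lra.
    - unfold D1; intros; lra.
    - intros x Hx. eapply deriv_cont; [unfold D1; lra|]. apply Bs; unfold D1; lra.
    - unfold p; rewrite Hw0, Hz0; assert (psi 0 > 0) by (apply Hpos; lra); lra.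
    - assert (Hzpos : forall s, 0 < s <= t0 -> 0 < z s).
      { intros s Hs'. rewrite <- Hz0. apply (mvt_pos D1 z (fun r => (w r - dpsi r * z r)/psi r)); try lra.
        - unfold D1; intros; lra.
        - intros; apply Bs; unfold D1; lra.
        - intros x Hx. assert (0 < psi x) by (apply Hpos; lra). apply Rdiv_lt_0_compat; auto.
          apply (Hbel x); lra. }
      assert (p 0 < p t0).
      { apply (mvt_pos D1 p (fun r => z r * (psi r * (B - dq r)))); try lra.
        - unfold D1; intros; lra.
        - intros; apply Bs; unfold D1; lra.
        - intros x Hx. apply Rmult_lt_0_compat; [apply Hzpos; lra|apply Hk; unfold D1; lra]. }
      assert (0 < p 0) by (unfold p; rewrite Hw0, Hz0; assert (psi 0 > 0) by (apply Hpos; lra); lra).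
      lra. }
  split; auto. split; [exact Hp|].
  intros r s Hr Hs' Hrs. apply (mvt_pos D1 z (fun r => (w r - dpsi r * z r)/psi r)); try lra.
  - unfold D1; intros; lra.
  - intros; apply Bs; unfold D1; lra.
  - intros x Hx. assert (0 < psi x) by (apply Hpos; lra). apply Rdiv_lt_0_compat; auto.
    apply (Hp x); lra.
Qed.

Lemma lim0 D f x : deriv_in D f x 1 -> forall eps, 0 < eps -> exists del, 0 < del /\
  forall s, D s -> s <> x -> Rabs (s - x) < del -> 1 - eps < (f s - f x) / (s - x) < 1 + eps.
Proof.
  intros H eps He; destruct (H eps He) as [d [Hd H']]; exists d; split; auto.
  intros s Ds Hs Hsd; specialize (H' s Ds Hs Hsd); apply Rabs_def2 in H'; lra.
Qed.

Lemma z1_mono a psi dpsi d2psi dq Bbar R1 B B' z wz y wy : Hyp a psi dpsi d2psi dq Bbar ->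
  0 < R1 -> R1 < a -> Bbar < B -> B < B' ->
  (forall r, 0 <= r < R1 -> deriv_in (fun r => 0 <= r < R1) (fun t => psi t * z t) r (wz r) /\
      deriv_in (fun r => 0 <= r < R1) (fun t => wz t / psi t) r (B * z r)) ->
  z 0 = 0 -> deriv_in (fun r => 0 <= r < R1) z 0 1 ->
  (forall r, 0 <= r < R1 -> deriv_in (fun r => 0 <= r < R1) (fun t => psi t * y t) r (wy r) /\
      deriv_in (fun r => 0 <= r < R1) (fun t => wy t / psi t) r (B' * y r)) ->
  y 0 = 0 -> deriv_in (fun r => 0 <= r < R1) y 0 1 ->
  forall r, 0 < r < R1 -> z r < y r.
Proof.
  intros H HR1 HR1a HB HBB' Hsz Hz0 Hz0' Hsy Hy0 Hy0'.
  assert (H' := H). destruct H' as (Ha & HC & Hpos & Hdq & Hb).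
  set (D1 := fun r => 0 <= r < R1).
  assert (HD : forall y, D1 y -> 0 <= y <= a) by (unfold D1; intros; lra).
  pose proof (basicH _ _ _ _ _ _ _ _ _ _ H HD Hsz) as Bz.
  pose proof (basicH _ _ _ _ _ _ _ _ _ _ H HD Hsy) as By.
  destruct (z1_fixed _ _ _ _ _ _ _ _ _ _ H HR1 HR1a HB Hsz Hz0 Hz0') as [_ [_ Zinc]].
  destruct (z1_fixed _ _ _ _ _ _ _ _ _ _ H HR1 HR1a (Rlt_trans _ _ _ HB HBB') Hsy Hy0 Hy0') as [_ [_ Yinc]].
  assert (Zp : forall r, 0 < r < R1 -> 0 < z r) by (intros r0 Hr0; pose proof (Zinc 0 r0); lra).
  assert (Yp : forall r, 0 < r < R1 -> 0 < y r) by (intros r0 Hr0; pose proof (Yinc 0 r0); lra).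
  set (W := fun t => psi t * z t * (wy t / psi t) - psi t * y t * (wz t / psi t)).
  assert (HW : forall r, D1 r -> deriv_in D1 W r (psi r * (B' - B) * z r * y r)).
  { apply (wronsk a psi dpsi d2psi B B' D1 z y wz wy); auto. }
  assert (Wp : forall r, 0 < r < R1 -> 0 < W r).
  { intros r Hr. replace 0 with (W 0) by (unfold W; rewrite Hz0, Hy0; field; apply Rgt_not_eq, Hpos; lra).
    apply (mvt_pos D1 W (fun r => psi r * (B' - B) * z r * y r)); try lra.
    - unfold D1; intros; lra.
    - intros; apply HW; unfold D1; lra.
    - intros x Hx. assert (0 < psi x) by (apply Hpos; lra).
      assert (0 < z x) by (apply Zp; lra). assert (0 < y x) by (apply Yp; lra).
      repeat apply Rmult_lt_0_compat; lra. }
  set (D2 := fun r => 0 < r < R1).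
  assert (HD2 : forall r, D2 r -> D1 r) by (unfold D1, D2; intros; lra).
  assert (Hrat : forall r, D2 r -> deriv_in D2 (fun t => y t / z t) r
     (((wy r - dpsi r * y r)/psi r * z r - y r * ((wz r - dpsi r * z r)/psi r)) / (z r * z r))).
  { intros r Hr. apply deriv_div; auto.
    - intros t Ht; specialize (Zp t Ht); lra.
    - apply (deriv_sub D1); auto; apply By; auto.
    - apply (deriv_sub D1); auto; apply Bz; auto. }
  assert (Rinc : forall s r, 0 < s < r -> r < R1 -> y s / z s < y r / z r).
  { intros s r Hs Hr. apply (mvt_pos D2 (fun t => y t / z t) (fun r => ((wy r - dpsi r * y r)/psi r * z r - y r * ((wz r - dpsi r * z r)/psi r)) / (z r * z r))); try lra.
    - unfold D2; intros; lra.
    - intros; apply Hrat; unfold D2; lra.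
    - intros x Hx. assert (0 < psi x) by (apply Hpos; lra).
      assert (0 < z x) by (apply Zp; lra). assert (0 < W x) by (apply Wp; lra).
      cbv beta; replace ((wy x - dpsi x * y x) / psi x * z x - y x * ((wz x - dpsi x * z x) / psi x))
        with (W x / psi x) by (unfold W; cbv beta; field; lra).
      apply Rdiv_lt_0_compat; [apply Rdiv_lt_0_compat|]; nra. }
  intros r Hr. apply Rnot_le_lt; intro Hle.
  set (c := y (r/2) / z (r/2)).
  assert (Hc1 : c < 1).
  { assert (c < y r / z r) by (apply Rinc; lra).
    assert (y r / z r <= 1).
    { assert (0 < z r) by (apply Zp; lra). apply (Rmult_le_reg_r (z r)); auto.
      unfold Rdiv; rewrite Rmult_assoc, Rinv_l; lra. }
    lra. }
  assert (Hc0 : 0 < c) by (unfold c; apply Rdiv_lt_0_compat; [apply Yp|apply Zp]; lra).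
  set (eps := (1 - c)/4).
  destruct (lim0 _ _ _ Hy0' eps ltac:(unfold eps; lra)) as [d1 [Hd1 H1]].
  destruct (lim0 _ _ _ Hz0' eps ltac:(unfold eps; lra)) as [d2 [Hd2 H2]].
  set (s := Rmin (Rmin d1 d2) (r/2) / 2).
  assert (Hm1 := Rmin_l (Rmin d1 d2) (r/2)). assert (Hm2 := Rmin_r (Rmin d1 d2) (r/2)).
  assert (Hm3 := Rmin_l d1 d2). assert (Hm4 := Rmin_r d1 d2).
  assert (Hs0 : 0 < s) by (assert (0 < Rmin (Rmin d1 d2) (r/2)) by (repeat apply Rmin_glb_lt; lra); unfold s; lra).
  assert (Hsr : s < r/2) by (unfold s; lra).
  assert (Habs : Rabs (s - 0) = s) by (rewrite Rminus_0_r; apply Rabs_right; lra).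
  specialize (H1 s ltac:(unfold D1; lra) ltac:(lra) ltac:(rewrite Habs; unfold s; lra)).
  specialize (H2 s ltac:(unfold D1; lra) ltac:(lra) ltac:(rewrite Habs; unfold s; lra)).
  rewrite Hy0, Rminus_0_r, Rminus_0_r in H1. rewrite Hz0, Rminus_0_r, Rminus_0_r in H2.
  assert (Hlt : y s / z s < c) by (apply Rinc; lra).
  assert (0 < z s) by (apply Zp; lra).
  assert (Hlt' : y s < c * z s).
  { apply (Rmult_lt_compat_r (z s)) in Hlt; auto. unfold Rdiv in Hlt; rewrite Rmult_assoc, Rinv_l in Hlt; lra. }
  set (Y := y s / s) in *. set (Z := z s / s) in *.
  assert (EY : y s = Y * s) by (unfold Y; field; lra).
  assert (EZ : z s = Z * s) by (unfold Z; field; lra).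
  rewrite EY, EZ in Hlt'. assert (Y < c * Z) by nra.
  unfold eps in *. nra.
Qed.

Lemma psi_bounds a psi dpsi d2psi dq Bbar : Hyp a psi dpsi d2psi dq Bbar ->
  exists m M, 0 < m /\ 0 < M /\ forall x, 0 <= x <= a -> m <= psi x <= M.
Proof.
  intros (Ha & HC & Hpos & Hdq & Hb).
  destruct (evt (fun t => 0 <= t <= a) psi 0 a) as [[M HM] [m [Hm Hm']]]; auto; try lra.
  - intros x Hx; destruct (HC x Hx) as [H1 _]; eapply deriv_cont; eauto.
  - exists (psi m), M; split; [apply Hpos; auto|]. split.
    + specialize (HM 0 ltac:(lra)); specialize (Hpos 0 ltac:(lra)); lra.
    + intros x Hx; split; auto.
Qed.

Lemma z1_big a psi dpsi d2psi dq Bbar R1 (z1 : R -> R -> R) : Hyp a psi dpsi d2psi dq Bbar ->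
  0 < R1 -> R1 < a ->
  (forall B, Bbar < B ->
     solves_ode psi B (fun r => 0 <= r < R1) (fun r => z1 r B) /\
     z1 0 B = 0 /\
     deriv_in (fun r => 0 <= r < R1) (fun r => z1 r B) 0 1) ->
  forall r, 0 < r < R1 -> forall M, exists B0, forall B, B0 < B -> Bbar < B -> M < z1 r B.
Proof.
  intros H HR1 HR1a Hfam r Hr Mt.
  assert (H' := H). destruct H' as (Ha & HC & Hpos & Hdq & Hb).
  set (D1 := fun r => 0 <= r < R1).
  assert (HD : forall y, D1 y -> 0 <= y <= a) by (unfold D1; intros; lra).
  destruct (psi_bounds _ _ _ _ _ _ H) as [m [Mp [Hm [HMp Hmb]]]].
  set (B1 := Bbar + 1).
  destruct (Hfam B1 ltac:(unfold B1; lra)) as [[w1 Hs1] [H10 H10']].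
  destruct (z1_fixed _ _ _ _ _ _ _ B1 _ _ H HR1 HR1a ltac:(unfold B1; lra) Hs1 H10 H10') as [_ [_ Inc1]].
  set (L := z1 (r/2) B1).
  assert (HL : 0 < L) by (unfold L; rewrite <- H10; apply Inc1; lra).
  set (K := L * m * r * r / (16 * Mp)).
  assert (HK : 0 < K) by (unfold K; apply Rdiv_lt_0_compat; [repeat apply Rmult_lt_0_compat|]; lra).
  exists (B1 + Rabs Mt / K). intros B HB0 HB.
  assert (HB1 : B1 < B) by (assert (0 <= Rabs Mt / K) by (unfold Rdiv; apply Rmult_le_pos; [apply Rabs_pos|left; apply Rinv_0_lt_compat; lra]); lra).
  destruct (Hfam B HB) as [[w Hs] [Hz0 Hz0']].
  set (z := fun t => z1 t B) in *.
  destruct (z1_fixed _ _ _ _ _ _ _ B _ _ H HR1 HR1a HB Hs Hz0 Hz0') as [Hw0 [Hp Inc]].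
  pose proof (basicH _ _ _ _ _ _ _ _ _ _ H HD Hs) as Bs.
  assert (Hmono := z1_mono _ _ _ _ _ _ _ B1 B (fun t => z1 t B1) w1 z w H HR1 HR1a ltac:(unfold B1; lra) HB1 Hs1 H10 H10' Hs Hz0 Hz0').
  assert (HzL : forall t, r/2 <= t <= r -> L <= z t).
  { intros t Ht. assert (L < z (r/2)) by (apply Hmono; lra).
    destruct (Req_dec t (r/2)) as [->|Hne]; [lra|]. assert (z (r/2) < z t) by (apply Inc; lra). lra. }
  set (p := fun t => w t - dpsi t * z t).
  assert (Hp1 : L * m * (B - Bbar) * (r/4) <= p (3*r/4) - p (r/2)).
  { replace (r/4) with (3*r/4 - r/2) by field.
    apply (mvt_lb D1 p (fun t => z t * (psi t * (B - dq t)))); try lra.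
    - unfold D1; intros; lra.
    - intros; apply Bs; unfold D1; lra.
    - intros x Hx. cbv beta. assert (HzLx := HzL x ltac:(lra)).
      destruct (Hmb x ltac:(lra)). pose proof (Rle_abs (dq x)); pose proof (Hb x ltac:(lra)).
      assert (0 <= B - Bbar) by lra. assert (Bbar - dq x >= 0) by lra.
      assert (m * (B - Bbar) <= psi x * (B - dq x)).
      { assert (0 <= (psi x - m) * (B - dq x)) by (apply Rmult_le_pos; lra).
        assert (0 <= m * (Bbar - dq x)) by (apply Rmult_le_pos; lra). nra. }
      assert (0 <= m * (B - Bbar)) by (apply Rmult_le_pos; lra).
      assert (0 <= (z x - L) * (psi x * (B - dq x))) by (apply Rmult_le_pos; lra).
      assert (0 <= L * (psi x * (B - dq x) - m * (B - Bbar))) by (apply Rmult_le_pos; lra). nra. }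
  assert (Hpr2 : 0 < p (r/2)) by (apply Hp; lra).
  assert (Hpx : forall x, 3*r/4 <= x < r -> p (3*r/4) <= p x).
  { intros x Hx. destruct (Req_dec x (3*r/4)) as [->|Hne]; [lra|]. left.
    apply (mvt_pos D1 p (fun t => z t * (psi t * (B - dq t)))); try lra.
    - unfold D1; intros; lra.
    - intros; apply Bs; unfold D1; lra.
    - intros y Hy. apply Rmult_lt_0_compat; [|eapply kpos; eauto; lra].
      rewrite <- Hz0; apply Inc; lra. }
  set (K1 := L * m * (B - Bbar) * (r/4)).
  assert (Hz2 : K1 / Mp * (r/4) <= z r - z (3*r/4)).
  { replace (K1 / Mp * (r/4)) with (K1 / Mp * (r - 3*r/4)) by (field; lra).
    apply (mvt_lb D1 z (fun t => (w t - dpsi t * z t) / psi t)); try lra.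
    - unfold D1; intros; lra.
    - intros; apply Bs; unfold D1; lra.
    - intros x Hx. cbv beta. assert (Hpx' := Hpx x ltac:(lra)). fold (p x).
      destruct (Hmb x ltac:(lra)).
      assert (HK1 : 0 <= K1) by (unfold K1; apply Rmult_le_pos; [apply Rmult_le_pos; [apply Rmult_le_pos|]|]; lra).
      assert (K1 <= p x) by (unfold K1; lra).
      apply (Rmult_le_reg_r (Mp * psi x)); [apply Rmult_lt_0_compat; lra|].
      replace (K1 / Mp * (Mp * psi x)) with (K1 * psi x) by (field; lra).
      replace (p x / psi x * (Mp * psi x)) with (p x * Mp) by (field; lra).
      nra. }
  assert (Hz34 : 0 < z (3*r/4)) by (rewrite <- Hz0; apply Inc; lra).
  assert (Hfin : (B - Bbar) * K <= z r).
  { replace ((B - Bbar) * K) with (K1 / Mp * (r / 4)) by (unfold K, K1; field; lra). lra. }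
  assert (Hfin2 : Rabs Mt < (B - Bbar) * K).
  { assert (Rabs Mt / K < B - Bbar) by (unfold B1 in HB0; lra).
    apply (Rmult_lt_compat_r K) in H0; auto. unfold Rdiv in H0; rewrite Rmult_assoc, Rinv_l in H0; lra. }
  pose proof (Rle_abs Mt). unfold z in Hfin. lra.
Qed.

Lemma cont_opp D f x : cont_in D f x -> cont_in D (fun t => - f t) x.
Proof.
  intros H eps He; destruct (H eps He) as [d [Hd H']]; exists d; split; auto.
  intros y Dy Hy; replace (- f y - - f x) with (- (f y - f x)) by ring; rewrite Rabs_Ropp; auto.
Qed.

Lemma z2_fixed a psi dpsi d2psi dq Bbar R2 beta B z w : Hyp a psi dpsi d2psi dq Bbar ->
  0 < R2 -> R2 < a -> 0 < beta -> Bbar < B ->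
  (forall r, R2 < r <= a -> deriv_in (fun r => R2 < r <= a) (fun t => psi t * z t) r (w r) /\
      deriv_in (fun r => R2 < r <= a) (fun t => w t / psi t) r (B * z r)) ->
  z a = beta -> deriv_in (fun r => R2 < r <= a) z a (-1) ->
  w a = dpsi a * beta - psi a /\ (forall r, R2 < r <= a -> w r - dpsi r * z r < 0) /\
  (forall r s, R2 < r <= a -> R2 < s <= a -> r < s -> z s < z r).
Proof.
  intros H HR2 HR2a Hbeta HB Hs Hza Hza'.
  assert (H' := H). destruct H' as (Ha & HC & Hpos & Hdq & Hb).
  set (D2 := fun r => R2 < r <= a).
  assert (HD : forall y, D2 y -> 0 <= y <= a) by (unfold D2; intros; lra).
  pose proof (basicH _ _ _ _ _ _ _ _ _ _ H HD Hs) as Bs.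
  assert (Hk : forall r, D2 r -> 0 < psi r * (B - dq r)) by (intros; eapply kpos; eauto).
  assert (Hpa : psi a > 0) by (apply Hpos; lra).
  assert (Hwa : w a = dpsi a * beta - psi a).
  { assert (E : (w a - dpsi a * z a) / psi a = -1).
    { apply (deriv_unique ((R2+a)/2) a z a); [lra|lra| |].
      - apply (deriv_sub D2); [unfold D2; intros; lra|]. apply Bs; unfold D2; lra.
      - apply (deriv_sub D2); [unfold D2; intros; lra|]. exact Hza'. }
    rewrite Hza in E. 
    apply (Rmult_eq_compat_r (psi a)) in E. field_simplify in E; lra. }
  set (p := fun t => w t - dpsi t * z t).
  assert (Hpa' : p a < 0) by (unfold p; rewrite Hwa, Hza; lra).
  assert (Hp : forall r, R2 < r <= a -> p r < 0).
  { intros r1 Hr1. destruct (Req_dec r1 a) as [->|Hne]; auto.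
    apply Rnot_le_lt; intro Hle.
    destruct (last_zero D2 (fun t => - p t) r1 a) as [t0 [Ht0 [Hpt0 Hbel]]]; try lra.
    - unfold D2; intros; lra.
    - intros x Hx. apply cont_opp. eapply deriv_cont; [unfold D2; lra|]. apply Bs; unfold D2; lra.
    - assert (Hzpos : forall s, t0 <= s < a -> beta < z s).
      { intros s Hs'. rewrite <- Hza. apply (mvt_neg D2 z (fun r => (w r - dpsi r * z r)/psi r)); try lra.
        - unfold D2; intros; lra.
        - intros; apply Bs; unfold D2; lra.
        - intros x Hx. assert (0 < psi x) by (apply Hpos; lra).
          assert (0 < - p x) by (apply Hbel; lra). unfold p in *.
          apply Ropp_lt_cancel. rewrite Ropp_0. replace (- ((w x - dpsi x * z x) / psi x)) with (- (w x - dpsi x * z x) / psi x) by (field; lra).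
          apply Rdiv_lt_0_compat; lra. }
      assert (p t0 < p a).
      { apply (mvt_pos D2 p (fun r => z r * (psi r * (B - dq r)))); try lra.
        - unfold D2; intros; lra.
        - intros; apply Bs; unfold D2; lra.
        - intros x Hx. apply Rmult_lt_0_compat; [assert (beta < z x) by (apply Hzpos; lra); lra|apply Hk; unfold D2; lra]. }
      lra. }
  split; auto. split; [exact Hp|].
  intros r s Hr Hs' Hrs. apply (mvt_neg D2 z (fun r => (w r - dpsi r * z r)/psi r)); try lra.
  - unfold D2; intros; lra.
  - intros; apply Bs; unfold D2; lra.
  - intros x Hx. assert (0 < psi x) by (apply Hpos; lra).
    assert (p x < 0) by (apply Hp; lra). unfold p in *.
    apply Ropp_lt_cancel. rewrite Ropp_0. replace (- ((w x - dpsi x * z x) / psi x)) with (- (w x - dpsi x * z x) / psi x) by (field; lra).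
    apply Rdiv_lt_0_compat; lra.
Qed.

Lemma z2_mono a psi dpsi d2psi dq Bbar R2 beta B B' z wz y wy : Hyp a psi dpsi d2psi dq Bbar ->
  0 < R2 -> R2 < a -> 0 < beta -> Bbar < B -> B < B' ->
  (forall r, R2 < r <= a -> deriv_in (fun r => R2 < r <= a) (fun t => psi t * z t) r (wz r) /\
      deriv_in (fun r => R2 < r <= a) (fun t => wz t / psi t) r (B * z r)) ->
  z a = beta -> deriv_in (fun r => R2 < r <= a) z a (-1) ->
  (forall r, R2 < r <= a -> deriv_in (fun r => R2 < r <= a) (fun t => psi t * y t) r (wy r) /\
      deriv_in (fun r => R2 < r <= a) (fun t => wy t / psi t) r (B' * y r)) ->
  y a = beta -> deriv_in (fun r => R2 < r <= a) y a (-1) ->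
  forall r, R2 < r < a -> z r < y r.
Proof.
  intros H HR2 HR2a Hbeta HB HBB' Hsz Hza Hza' Hsy Hya Hya'.
  assert (H' := H). destruct H' as (Ha & HC & Hpos & Hdq & Hb).
  set (D2 := fun r => R2 < r <= a).
  assert (HD : forall y, D2 y -> 0 <= y <= a) by (unfold D2; intros; lra).
  pose proof (basicH _ _ _ _ _ _ _ _ _ _ H HD Hsz) as Bz.
  pose proof (basicH _ _ _ _ _ _ _ _ _ _ H HD Hsy) as By.
  destruct (z2_fixed _ _ _ _ _ _ _ _ _ _ _ H HR2 HR2a Hbeta HB Hsz Hza Hza') as [Hwz [_ Zdec]].
  destruct (z2_fixed _ _ _ _ _ _ _ _ _ _ _ H HR2 HR2a Hbeta (Rlt_trans _ _ _ HB HBB') Hsy Hya Hya') as [Hwy [_ Ydec]].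
  assert (Zp : forall r, R2 < r <= a -> beta <= z r).
  { intros r0 Hr0; destruct (Req_dec r0 a) as [->|]; [lra|]. pose proof (Zdec r0 a); lra. }
  assert (Yp : forall r, R2 < r <= a -> beta <= y r).
  { intros r0 Hr0; destruct (Req_dec r0 a) as [->|]; [lra|]. pose proof (Ydec r0 a); lra. }
  set (W := fun t => psi t * z t * (wy t / psi t) - psi t * y t * (wz t / psi t)).
  assert (HW : forall r, D2 r -> deriv_in D2 W r (psi r * (B' - B) * z r * y r)).
  { apply (wronsk a psi dpsi d2psi B B' D2 z y wz wy); auto. }
  assert (Hpa : psi a > 0) by (apply Hpos; lra).
  assert (Wn : forall r, R2 < r < a -> W r < 0).
  { intros r Hr. replace 0 with (W a) by (unfold W; rewrite Hza, Hya, Hwz, Hwy; field; lra).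
    apply (mvt_pos D2 W (fun r => psi r * (B' - B) * z r * y r)); try lra.
    - unfold D2; intros; lra.
    - intros; apply HW; unfold D2; lra.
    - intros x Hx. assert (0 < psi x) by (apply Hpos; lra).
      assert (beta <= z x) by (apply Zp; lra). assert (beta <= y x) by (apply Yp; lra).
      repeat apply Rmult_lt_0_compat; lra. }
  assert (Hrat : forall r, D2 r -> deriv_in D2 (fun t => y t / z t) r
     (((wy r - dpsi r * y r)/psi r * z r - y r * ((wz r - dpsi r * z r)/psi r)) / (z r * z r))).
  { intros r Hr. apply deriv_div; auto.
    - intros t Ht; specialize (Zp t Ht); lra.
    - apply By; auto.
    - apply Bz; auto. }
  intros r Hr.
  assert (Hlt : y a / z a < y r / z r).
  { apply (mvt_neg D2 (fun t => y t / z t) (fun r => ((wy r - dpsi r * y r)/psi r * z r - y r * ((wz r - dpsi r * z r)/psi r)) / (z r * z r))); try lra.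
    - unfold D2; intros; lra.
    - intros; apply Hrat; unfold D2; lra.
    - intros x Hx. assert (0 < psi x) by (apply Hpos; lra).
      assert (beta <= z x) by (apply Zp; lra). assert (W x < 0) by (apply Wn; lra).
      cbv beta; replace ((wy x - dpsi x * y x) / psi x * z x - y x * ((wz x - dpsi x * z x) / psi x))
        with (W x / psi x) by (unfold W; cbv beta; field; lra).
      apply Ropp_lt_cancel. rewrite Ropp_0.
      replace (- (W x / psi x / (z x * z x))) with ((- W x) / psi x / (z x * z x)) by (field; split; lra).
      apply Rdiv_lt_0_compat; [apply Rdiv_lt_0_compat|]; nra. }
  rewrite Hza, Hya in Hlt. replace (beta / beta) with 1 in Hlt by (field; lra).
  assert (beta <= z r) by (apply Zp; lra).
  apply (Rmult_lt_compat_r (z r)) in Hlt; [|lra].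
  unfold Rdiv in Hlt; rewrite Rmult_assoc, Rinv_l in Hlt; lra.
Qed.

Lemma z2_big a psi dpsi d2psi dq Bbar R2 beta (z2 : R -> R -> R) : Hyp a psi dpsi d2psi dq Bbar ->
  0 < R2 -> R2 < a -> 0 < beta ->
  (forall B, Bbar < B ->
     solves_ode psi B (fun r => R2 < r <= a) (fun r => z2 r B) /\
     z2 a B = beta /\
     deriv_in (fun r => R2 < r <= a) (fun r => z2 r B) a (-1)) ->
  forall r, R2 < r < a -> forall M, exists B0, forall B, B0 < B -> Bbar < B -> M < z2 r B.
Proof.
  intros H HR2 HR2a Hbeta Hfam r Hr Mt.
  assert (H' := H). destruct H' as (Ha & HC & Hpos & Hdq & Hb).
  set (D2 := fun r => R2 < r <= a).
  assert (HD : forall y, D2 y -> 0 <= y <= a) by (unfold D2; intros; lra).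
  destruct (psi_bounds _ _ _ _ _ _ H) as [m [Mp [Hm [HMp Hmb]]]].
  set (h := (a - r)/2). set (t2 := (r + a)/2).
  set (K := m * beta * h * h / Mp).
  assert (HK : 0 < K) by (unfold K, h; apply Rdiv_lt_0_compat; [repeat apply Rmult_lt_0_compat|]; lra).
  exists (Bbar + Rabs Mt / K). intros B HB0 HB.
  destruct (Hfam B HB) as [[w Hs] [Hza Hza']].
  set (z := fun t => z2 t B) in *.
  destruct (z2_fixed _ _ _ _ _ _ _ _ B _ _ H HR2 HR2a Hbeta HB Hs Hza Hza') as [Hwa [Hp Dec]].
  pose proof (basicH _ _ _ _ _ _ _ _ _ _ H HD Hs) as Bs.
  assert (Zp : forall x, R2 < x <= a -> beta <= z x).
  { intros r0 Hr0; destruct (Req_dec r0 a) as [->|]; [unfold z in *; cbv beta in *; lra|]. pose proof (Dec r0 a); unfold z in *; cbv beta in *; lra. }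
  set (p := fun t => w t - dpsi t * z t).
  set (C := B - Bbar).
  assert (HC0 : 0 < C) by (unfold C; lra).
  assert (Hp1 : m * beta * C * (a - t2) <= p a - p t2).
  { apply (mvt_lb D2 p (fun t => z t * (psi t * (B - dq t)))); try (unfold t2; lra).
    - unfold D2, t2; intros; lra.
    - intros; apply Bs; unfold D2, t2 in *; lra.
    - intros x Hx. cbv beta. assert (Hzx := Zp x ltac:(unfold t2 in *; lra)).
      destruct (Hmb x ltac:(unfold t2 in *; lra)). pose proof (Rle_abs (dq x)); pose proof (Hb x ltac:(unfold t2 in *; lra)).
      assert (Bbar - dq x >= 0) by lra.
      assert (m * C <= psi x * (B - dq x)).
      { assert (0 <= (psi x - m) * (B - dq x)) by (apply Rmult_le_pos; unfold C in *; lra).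
        assert (0 <= m * (Bbar - dq x)) by (apply Rmult_le_pos; lra). unfold C; nra. }
      assert (0 <= m * C) by (apply Rmult_le_pos; lra).
      assert (0 <= (z x - beta) * (psi x * (B - dq x))) by (apply Rmult_le_pos; lra).
      assert (0 <= beta * (psi x * (B - dq x) - m * C)) by (apply Rmult_le_pos; lra). nra. }
  assert (Hpa : p a < 0) by (apply Hp; lra).
  assert (Hpx : forall x, r <= x <= t2 -> p x <= p t2).
  { intros x Hx. destruct (Req_dec x t2) as [->|Hne]; [lra|]. left.
    apply (mvt_pos D2 p (fun t => z t * (psi t * (B - dq t)))); try (unfold t2 in *; lra).
    - unfold D2, t2; intros; lra.
    - intros; apply Bs; unfold D2, t2 in *; lra.
    - intros y Hy. apply Rmult_lt_0_compat; [|eapply kpos; eauto; unfold t2 in *; lra].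
      assert (beta <= z y) by (apply Zp; unfold t2 in *; lra); lra. }
  set (K1 := m * beta * C * (a - t2)).
  assert (HK1 : 0 <= K1) by (unfold K1, t2; repeat apply Rmult_le_pos; lra).
  assert (Hz2 : z t2 - z r <= - K1 / Mp * (t2 - r)).
  { apply (mvt_ub D2 z (fun t => (w t - dpsi t * z t) / psi t)); try (unfold t2; lra).
    - unfold D2, t2; intros; lra.
    - intros; apply Bs; unfold D2, t2 in *; lra.
    - intros x Hx. cbv beta. assert (Hpx' := Hpx x ltac:(lra)). fold (p x).
      destruct (Hmb x ltac:(unfold t2 in *; lra)).
      assert (p x <= - K1) by (unfold K1; lra).
      apply (Rmult_le_reg_r (Mp * psi x)); [apply Rmult_lt_0_compat; lra|].
      replace (- K1 / Mp * (Mp * psi x)) with (- K1 * psi x) by (field; lra).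
      replace (p x / psi x * (Mp * psi x)) with (p x * Mp) by (field; lra).
      nra. }
  assert (Hzt2 : beta <= z t2) by (apply Zp; unfold t2; lra).
  assert (Hfin : C * K <= z r).
  { replace (C * K) with (K1 / Mp * (t2 - r)) by (unfold K, K1, t2, h; field; lra). lra. }
  assert (Hfin2 : Rabs Mt < C * K).
  { assert (Hq : Rabs Mt / K < C) by (unfold C; lra).
    apply (Rmult_lt_compat_r K) in Hq; auto. unfold Rdiv in Hq; rewrite Rmult_assoc, Rinv_l in Hq; lra. }
  pose proof (Rle_abs Mt). unfold z in Hfin. lra.
Qed.

Theorem lemma5p4
  (a : R) (psi dpsi d2psi dq : R -> R) (R1 R2 beta Bbar : R)
  (z1 z2 : R -> R -> R) :
  0 < a ->
  C2_on (fun r => 0 <= r <= a) psi dpsi d2psi ->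
  (forall r, 0 <= r <= a -> 0 < psi r) ->
  0 < R1 -> R1 < R2 -> R2 < a ->
  0 < beta ->
  (forall r, 0 <= r <= a ->
     deriv_in (fun t => 0 <= t <= a) (fun t => dpsi t / psi t) r (dq r)) ->
  (forall r, 0 <= r <= a -> Rabs (dq r) <= Bbar) ->
  (exists r, 0 <= r <= a /\ Rabs (dq r) = Bbar) ->
  (forall B, Bbar < B ->
     solves_ode psi B (fun r => 0 <= r < R1) (fun r => z1 r B) /\
     z1 0 B = 0 /\
     deriv_in (fun r => 0 <= r < R1) (fun r => z1 r B) 0 1) ->
  (forall B, Bbar < B ->
     solves_ode psi B (fun r => R2 < r <= a) (fun r => z2 r B) /\
     z2 a B = beta /\
     deriv_in (fun r => R2 < r <= a) (fun r => z2 r B) a (-1)) ->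
  (forall B, Bbar < B -> forall r, 0 < r < R1 -> 0 < z1 r B) /\
  (forall B, Bbar < B -> forall r s, 0 <= r < R1 -> 0 <= s < R1 -> r < s ->
     z1 r B < z1 s B) /\
  (forall r, 0 < r < R1 -> forall B B', Bbar < B -> B < B' -> z1 r B < z1 r B') /\
  (forall r, 0 < r < R1 -> forall M, exists B0, forall B, B0 < B -> Bbar < B ->
     M < z1 r B) /\
  (forall B, Bbar < B -> forall r, R2 < r < a -> beta < z2 r B) /\
  (forall B, Bbar < B -> forall r s, R2 < r < a -> R2 < s < a -> r < s ->
     z2 s B < z2 r B) /\
  (forall r, R2 < r < a -> forall B B', Bbar < B -> B < B' -> z2 r B < z2 r B') /\
  (forall r, R2 < r < a -> forall M, exists B0, forall B, B0 < B -> Bbar < B ->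
     M < z2 r B).
Proof.
  intros Ha HC Hpos HR1 HR12 HR2a Hbeta Hdq Hb _ Hf1 Hf2.
  assert (H : Hyp a psi dpsi d2psi dq Bbar) by (unfold Hyp; split; [exact Ha|split; [exact HC|split; [exact Hpos|split; [exact Hdq|exact Hb]]]]).
  assert (HR1a : R1 < a) by lra. assert (HR2 : 0 < R2) by lra.
  assert (F1 : forall B, Bbar < B -> forall r s, 0 <= r < R1 -> 0 <= s < R1 -> r < s -> z1 r B < z1 s B).
  { intros B HB. destruct (Hf1 B HB) as [[w Hs] [H0 H0']].
    destruct (z1_fixed _ _ _ _ _ _ _ B (fun r => z1 r B) w H HR1 HR1a HB Hs H0 H0') as [_ [_ Inc]].
    exact Inc. }
  assert (F2 : forall B, Bbar < B -> forall r s, R2 < r <= a -> R2 < s <= a -> r < s -> z2 s B < z2 r B).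
  { intros B HB. destruct (Hf2 B HB) as [[w Hs] [H0 H0']].
    destruct (z2_fixed _ _ _ _ _ _ _ _ B (fun r => z2 r B) w H HR2 HR2a Hbeta HB Hs H0 H0') as [_ [_ Dec]].
    exact Dec. }
  split; [|split; [|split; [|split; [|split; [|split; [|split]]]]]].
  - intros B HB r Hr. destruct (Hf1 B HB) as [_ [H0 _]]. rewrite <- H0. apply F1; auto; lra.
  - exact F1.
  - intros r Hr B B' HB HBB'.
    destruct (Hf1 B HB) as [[w Hs] [H0 H0']].
    destruct (Hf1 B' ltac:(lra)) as [[w' Hs'] [H0y H0y']].
    exact (z1_mono _ _ _ _ _ _ _ B B' (fun r => z1 r B) w (fun r => z1 r B') w' H HR1 HR1a HB HBB' Hs H0 H0' Hs' H0y H0y' r Hr).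
  - apply (z1_big a psi dpsi d2psi dq Bbar R1 z1); auto.
  - intros B HB r Hr. destruct (Hf2 B HB) as [_ [H0 _]]. rewrite <- H0. apply F2; auto; lra.
  - intros B HB r s Hr Hs Hrs. apply F2; auto; lra.
  - intros r Hr B B' HB HBB'.
    destruct (Hf2 B HB) as [[w Hs] [H0 H0']].
    destruct (Hf2 B' ltac:(lra)) as [[w' Hs'] [H0y H0y']].
    exact (z2_mono _ _ _ _ _ _ _ _ B B' (fun r => z2 r B) w (fun r => z2 r B') w' H HR2 HR2a Hbeta HB HBB' Hs H0 H0' Hs' H0y H0y' r Hr).
  - apply (z2_big a psi dpsi d2psi dq Bbar R2 beta z2); auto.
Qed.
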